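(* Let $\operatorname{char}(k)\ne2$, $r\ge2$, $m\ge2$, $a_1,\dots,a_{r+1},b_1,\dots,b_m\in X$, $\mu=[a_{r+1},\dots,a_1]_R$, $\nu=[b_m,\dots,b_1]_R$. For all $i,j$ with $2\le i\le r+1$ and $2\le j\le m$, $$(\mu\circ\nu)\sim(-1)^{|a_i||a_{i-1}\cdots a_1b_m\cdots b_j|+|b_j||a_{i-1}\cdots a_1b_m\cdots b_{j+1}|}\,(\mu_{a_i\mapsto b_j}\circ\nu_{b_j\mapsto a_i}),$$ where $\mu_{a_i\mapsto b_j}$ is obtained from $\mu$ by replacing the letter $a_i$ (in position $i$) by $b_j$, and $\nu_{b_j\mapsto a_i}$ is obtained from $\nu$ by replacing $b_j$ (in position $j$) by $a_i$. In particular, if $r=m$, $a_1=b_1$ and $a_1\in X_1$, then $(\mu\circ\nu)\sim-(\mu\circ\nu)$, and consequently $(\mu\circ\nu)$ equals in $\mathrm{GDN}_s(X)$ a linear combination of terms of length $\ell(\mu)+\ell(\nu)$ and root number $>r(\mu)+r(\nu)=2$.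
   Context: A GDN superalgebra is a superalgebra $\mathcal A=\mathcal A_0\oplus\mathcal A_1$ over a field $k$ (product $\circ$, $\mathcal A_i\circ\mathcal A_j\subseteq\mathcal A_{i+j}$ mod 2, $|x|=i$ for nonzero $x\in\mathcal A_i$) satisfying for homogeneous $x,y,z$: $x\circ(y\circ z)-(x\circ y)\circ z=(-1)^{|x||y|}(y\circ(x\circ z)-(y\circ x)\circ z)$ and $(x\circ y)\circ z=(-1)^{|y||z|}(x\circ z)\circ y$. $X=X_0\sqcup X_1$ is well-ordered, elements of $X_i$ have parity $i$, and $\mathrm{GDN}_s(X)$ is the free GDN superalgebra on $X$. Terms over $X$: letters of $X$ and products $(\mu\circ\nu)$ of terms, regarded as elements of $\mathrm{GDN}_s(X)$; length $\ell$ is the number of letters. $[\mu_1,\dots,\mu_n]_R=(\mu_1\circ(\cdots\circ(\mu_{n-1}\circ\mu_n)\cdots))$. Root number: $r(a)=0$ ($a\in X$), $r((\mu\circ\nu))=r(\mu)+1$ if $\nu\in X$, else $r(\mu)+r(\nu)$. For a string $a_1\cdots a_n$ of letters, $|a_1\cdots a_n|=|a_1|+\dots+|a_n|\pmod 2$, and the empty string has parity $0$. For terms $\mu,\nu$ with $r(\mu)=r(\nu)$, $\ell(\mu)=\ell(\nu)$ and nonzero $\alpha,\beta\in k$, write $\alpha\mu\sim\beta\nu$ if $\alpha\mu-\beta\nu=\sum_i\alpha_i\mu_i$ in $\mathrm{GDN}_s(X)$ for some $\alpha_i\in k$ and terms $\mu_i$ with $\ell(\mu_i)=\ell(\mu)$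 and $r(\mu_i)>r(\mu)$. *)

(* Defs.v *)
From HB Require Import structures.
From mathcomp Require Import all_boot all_order all_algebra.
Set Implicit Arguments. Unset Strict Implicit. Unset Printing Implicit Defensive.
Import Order.TTheory GRing.Theory Num.Theory.
Local Open Scope ring_scope.

Inductive term (X : Type) : Type :=
| Let : X -> term X
| Mul : term X -> term X -> term X.
Arguments Let {X} _.
Arguments Mul {X} _ _.

Section TermEq.
Variable X : eqType.
Fixpoint term_eqb (s t : term X) : bool :=
  match s, t with
  | Let x, Let y => x == y
  | Mul s1 s2, Mul t1 t2 => term_eqb s1 t1 && term_eqb s2 t2
  | _, _ => false
  end.
Lemma term_eqP : Equality.axiom term_eqb.
Proof.
elim=> [x|s1 IH1 s2 IH2] [y|t1 t2] /=; try by constructor.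
- by apply: (iffP eqP) => [->|[]].
- case: (IH1 t1) => [->|N1] /=; last by constructor; case.
  case: (IH2 t2) => [->|N2] /=; first by constructor.
  by constructor; case.
Qed.
HB.instance Definition _ := hasDecEq.Build (term X) term_eqP.
End TermEq.

Section GDN.
Variable k : fieldType.
Variable X : eqType.
(* parity of letters: par x = true iff x \in X_1 *)
Variable par : X -> bool.

Fixpoint tlen (t : term X) : nat :=
  match t with Let _ => 1%N | Mul u v => (tlen u + tlen v)%N end.

Fixpoint root_num (t : term X) : nat :=
  match t with
  | Let _ => 0%N
  | Mul u (Let _) => (root_num u).+1
  | Mul u v => (root_num u + root_num v)%N
  end.

Fixpoint tpar (t : term X) : bool :=
  match t with Let x => par x | Mul u v => tpar u (+) tpar v end.

Definition sgn (b : bool) : k := (-1) ^+ b.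

(* formal linear combinations of terms: elements of the free
   nonassociative superalgebra on X over k *)
Definition lc := seq (k * term X).

Definition coef (s : lc) (u : term X) : k := \sum_(p <- s | p.2 == u) p.1.
Definition lc_scale (a : k) (s : lc) : lc := [seq (a * p.1, p.2) | p <- s].
Definition lc_mull (t : term X) (s : lc) : lc := [seq (p.1, Mul t p.2) | p <- s].
Definition lc_mulr (s : lc) (t : term X) : lc := [seq (p.1, Mul p.2 t) | p <- s].

(* The (two-sided) ideal of the free nonassociative superalgebra generated by
   the GDN super-identities; gdn_zero s means that s is 0 in GDN_s(X). *)
Inductive gdn_zero : lc -> Prop :=
| gdn_nil : gdn_zero [::]
| gdn_rel1 (x y z : term X) :
    gdn_zero [:: (1, Mul x (Mul y z)); (-1, Mul (Mul x y) z);
                 (- sgn (tpar x && tpar y), Mul y (Mul x z));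
                 (sgn (tpar x && tpar y), Mul (Mul y x) z)]
| gdn_rel2 (x y z : term X) :
    gdn_zero [:: (1, Mul (Mul x y) z); (- sgn (tpar y && tpar z), Mul (Mul x z) y)]
| gdn_add (s t : lc) : gdn_zero s -> gdn_zero t -> gdn_zero (s ++ t)
| gdn_scale (a : k) (s : lc) : gdn_zero s -> gdn_zero (lc_scale a s)
| gdn_mull (t : term X) (s : lc) : gdn_zero s -> gdn_zero (lc_mull t s)
| gdn_mulr (t : term X) (s : lc) : gdn_zero s -> gdn_zero (lc_mulr s t)
| gdn_ext (s s' : lc) : gdn_zero s -> (forall u, coef s u = coef s' u) -> gdn_zero s'.

Definition gdn_sim (alpha : k) (mu : term X) (beta : k) (nu : term X) : Prop :=
  [/\ root_num mu = root_num nu, tlen mu = tlen nu, alpha != 0, beta != 0 &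
   exists s : lc,
     (forall p, p \in s -> tlen p.2 = tlen mu /\ (root_num mu < root_num p.2)%N) /\
     gdn_zero ([:: (alpha, mu); (- beta, nu)] ++ [seq (- p.1, p.2) | p <- s])].

(* right-normed term [a_n, ..., a_1]_R for a : nat -> X, n >= 1 *)
Fixpoint rnorm (a : nat -> X) (n : nat) : term X :=
  match n with
  | 0 => Let (a 0%N) (* unused *)
  | 1 => Let (a 1%N)
  | n'.+1 => Mul (Let (a n)) (rnorm a n')
  end.

(* parity of the string a_{hi-1} ... a_lo  (indices lo <= l < hi) *)
Definition spar (a : nat -> X) (lo hi : nat) : bool :=
  \big[addb/false]_(lo <= l < hi) par (a l).

Definition repl (a : nat -> X) (i : nat) (x : X) : nat -> X :=
  fun l => if l == i then x else a l.

End GDN.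

(* Main.v *)
Require Import Defs.
From HB Require Import structures.
From mathcomp Require Import all_boot all_order all_algebra.
From mathcomp Require Import ring zify.
Import Order.TTheory GRing.Theory Num.Theory.
Local Open Scope ring_scope.
Set Implicit Arguments. Unset Strict Implicit. Unset Printing Implicit Defensive.

Section Work.
Variable k : fieldType.
Variable X : eqType.
Variable par : X -> bool.

Local Notation lc := (lc k X).
Local Notation term := (term X).

Definition rr (t : term) : nat := if t is Let _ then 1%N else root_num t.

Lemma root_Mul (u v : term) : root_num (Mul u v) = (root_num u + rr v)%N.
Proof. by case: v => [x|v1 v2] //=; rewrite addn1. Qed.

Lemma root_le_rr (t : term) : (root_num t <= rr t)%N.
Proof. by case: t. Qed.

Lemma coef_cons (p : k * term) (s : lc) u :
  coef (p :: s) u = (p.2 == u)%:R * p.1 + coef s u.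
Proof. by rewrite /coef big_cons; case: eqP => _; rewrite ?mul1r ?mul0r ?add0r. Qed.

Lemma coef_nil u : coef ([::] : lc) u = 0.
Proof. by rewrite /coef big_nil. Qed.

Lemma coef_cat (s t : lc) u : coef (s ++ t) u = coef s u + coef t u.
Proof. by rewrite /coef big_cat. Qed.

Lemma coef_scale a (s : lc) u : coef (lc_scale a s) u = a * coef s u.
Proof.
elim: s => [|p s IH]; first by rewrite /lc_scale /= !coef_nil mulr0.
by rewrite /lc_scale /= !coef_cons -/(lc_scale a s) IH /=; ring.
Qed.

Definition lc_neg (s : lc) : lc := [seq (- p.1, p.2) | p <- s].

Lemma coef_neg (s : lc) u : coef (lc_neg s) u = - coef s u.
Proof.
elim: s => [|p s IH]; first by rewrite /= !coef_nil oppr0.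
by rewrite /= !coef_cons IH /=; ring.
Qed.

Definition higher (n L : nat) (h : lc) :=
  forall p, p \in h -> tlen p.2 = L /\ (n < root_num p.2)%N.

Definition EQ n L (s : lc) := exists h, higher n L h /\ gdn_zero par (s ++ h).

Lemma EQ_zero n L s : gdn_zero par s -> EQ n L s.
Proof. by move=> H; exists [::]; rewrite cats0; split. Qed.

Lemma EQ_ext n L s s' : EQ n L s -> (forall u, coef s u = coef s' u) -> EQ n L s'.
Proof.
move=> [h [Hh Hz]] Hc; exists h; split => //.
by apply: gdn_ext Hz _ => u; rewrite !coef_cat Hc.
Qed.

Lemma EQ_add n L s t : EQ n L s -> EQ n L t -> EQ n L (s ++ t).
Proof.
move=> [h1 [H1 Z1]] [h2 [H2 Z2]]; exists (h1 ++ h2); split.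
  by move=> p; rewrite mem_cat => /orP [] ?; [apply: H1|apply: H2].
apply: gdn_ext (gdn_add Z1 Z2) _ => u; rewrite !coef_cat; ring.
Qed.

Lemma EQ_scale n L a s : EQ n L s -> EQ n L (lc_scale a s).
Proof.
move=> [h [H Z]]; exists (lc_scale a h); split.
  by move=> p /mapP [q Hq ->] /=; exact: H.
by have := gdn_scale a Z; rewrite /lc_scale map_cat.
Qed.

Lemma EQ_mulr n L s t n' L' : EQ n L s -> n' = (n + rr t)%N -> L' = (L + tlen t)%N ->
  EQ n' L' (lc_mulr s t).
Proof.
move=> [h [H Z]] -> ->; exists (lc_mulr h t); split.
  move=> p /mapP [q Hq ->]; have [Hl Hr] := H q Hq.
  change (tlen (Mul q.2 t) = (L + tlen t)%N /\ (n + rr t < root_num (Mul q.2 t))%N).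
  by rewrite root_Mul ltn_add2r /= Hl.
by have := gdn_mulr t Z; rewrite /lc_mulr map_cat.
Qed.

Lemma EQ_mull n L s t n' L' : EQ n L s -> n' = (root_num t + n)%N -> L' = (tlen t + L)%N ->
  EQ n' L' (lc_mull t s).
Proof.
move=> [h [H Z]] -> ->; exists (lc_mull t h); split.
  move=> p /mapP [q Hq ->]; have [Hl Hr] := H q Hq.
  change (tlen (Mul t q.2) = (tlen t + L)%N /\ (root_num t + n < root_num (Mul t q.2))%N).
  rewrite root_Mul ltn_add2l /= Hl; split=> //; exact: leq_trans Hr (root_le_rr _).
by have := gdn_mull t Z; rewrite /lc_mull map_cat.
Qed.

Lemma sgnD (b c : bool) : sgn k (b (+) c) = sgn k b * sgn k c.
Proof. by case: b; case: c; rewrite /sgn /= ?expr1 ?expr0 ?mulr1 ?mul1r ?mulrNN ?mulr1. Qed.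

Lemma sgn_sq (b : bool) : sgn k b * sgn k b = 1.
Proof. by case: b; rewrite /sgn /= ?expr1 ?expr0 ?mulr1 ?mulrNN ?mulr1. Qed.

Lemma sgn_neq0 (b : bool) : sgn k b != 0.
Proof. by case: b; rewrite /sgn /= ?expr1 ?expr0 ?oppr_eq0 oner_eq0. Qed.

Definition simb n L (e : bool) (T T' : term) := EQ n L [:: (1, T); (- sgn k e, T')].

Lemma simb_refl n L T : simb n L false T T.
Proof.
have H0 : EQ n L [::] by apply: EQ_zero; exact: gdn_nil.
rewrite /simb; apply: (EQ_ext H0) => u.
rewrite coef_nil !coef_cons coef_nil /sgn expr0 /=. ring.
Qed.

Lemma simb_trans n L e1 e2 T1 T2 T3 :
  simb n L e1 T1 T2 -> simb n L e2 T2 T3 -> simb n L (e1 (+) e2) T1 T3.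
Proof.
move=> H1 H2; have := EQ_add H1 (EQ_scale (sgn k e1) H2).
move/EQ_ext; apply=> u; rewrite coef_cat coef_scale !coef_cons !coef_nil /= sgnD.
ring.
Qed.

Lemma simb_sym n L e T T' : simb n L e T T' -> simb n L e T' T.
Proof.
move=> H; have := EQ_scale (- sgn k e) H.
move/EQ_ext; apply=> u; rewrite coef_scale !coef_cons !coef_nil /=.
have := sgn_sq e; set c := sgn k e => Hc.
transitivity ((T' == u)%:R * (c * c) - c * (T == u)%:R); first by ring.
rewrite Hc; ring.
Qed.

Lemma simb_eqb n L e e' T T' : simb n L e T T' -> e = e' -> simb n L e' T T'.
Proof. by move=> H <-. Qed.

Lemma simb_mulr n L e T T' t n' L' : simb n L e T T' ->
  n' = (n + rr t)%N -> L' = (L + tlen t)%N -> simb n' L' e (Mul T t) (Mul T' t).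
Proof. by move=> H; apply: EQ_mulr H. Qed.

Lemma simb_mull n L e T T' t n' L' : simb n L e T T' ->
  n' = (root_num t + n)%N -> L' = (tlen t + L)%N -> simb n' L' e (Mul t T) (Mul t T').
Proof. by move=> H; apply: EQ_mull H. Qed.

Lemma simb_rel2 n L (x y z : term) :
  simb n L (tpar par y && tpar par z) (Mul (Mul x y) z) (Mul (Mul x z) y).
Proof. exact/EQ_zero/gdn_rel2. Qed.

Lemma simb_swap (x y : X) (z : term) n L :
  n = root_num (Mul (Let x) (Mul (Let y) z)) -> L = (2 + tlen z)%N ->
  simb n L (par x && par y) (Mul (Let x) (Mul (Let y) z)) (Mul (Let y) (Mul (Let x) z)).
Proof.
move=> -> ->.
exists [:: (-1, Mul (Mul (Let x) (Let y)) z); (sgn k (par x && par y), Mul (Mul (Let y) (Let x)) z)].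
split.
  move=> p; rewrite !inE => /orP [] /eqP -> /=; split; rewrite ?addnA //;
  by case: z => //=.
apply: (gdn_ext (@gdn_rel1 k X par (Let x) (Let y) z)) => u.
rewrite !coef_cons !coef_nil /=; ring.
Qed.


Implicit Types a b : nat -> X.
Definition del (a : nat -> X) i l := if (l < i)%N then a l else a l.+1.

Lemma root_LetMul x t : root_num (Mul (Let x) t) = rr t.
Proof. by rewrite root_Mul. Qed.

Lemma rr_Mul u v : rr (Mul u v) = root_num (Mul u v).
Proof. by []. Qed.

Lemma rnormS a n : (0 < n)%N -> rnorm a n.+1 = Mul (Let (a n.+1)) (rnorm a n).
Proof. by case: n. Qed.

Lemma rnorm_ext a a' n : (forall l, (0 < l <= n.+1)%N -> a l = a' l) ->
  rnorm a n.+1 = rnorm a' n.+1.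
Proof.
elim: n => [|n IH] H; first by rewrite /= (H 1%N).
rewrite (@rnormS a n.+1) // (@rnormS a' n.+1) // (H n.+2) //.
  congr Mul; apply: IH => l /andP [l0 ln].
  by apply: H; rewrite l0 /=; exact: leqW.
by rewrite leqnn.
Qed.

Lemma tlen_rnorm a n : tlen (rnorm a n.+1) = n.+1.
Proof. by elim: n => // n IH; rewrite rnormS //= IH. Qed.

Lemma rr_rnorm a n : rr (rnorm a n.+1) = 1%N.
Proof.
by elim: n => // n IH; rewrite rnormS.
Qed.

Lemma root_rnorm a n : root_num (rnorm a n.+2) = 1%N.
Proof. by have := rr_rnorm a n.+1; rewrite rnormS. Qed.

Lemma spar_ext a a' lo hi : (forall l, (lo <= l < hi)%N -> a l = a' l) ->
  spar par a lo hi = spar par a' lo hi.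
Proof. by move=> H; apply: eq_big_nat => l /H ->. Qed.

Lemma spar_recr a lo hi : (lo <= hi)%N -> spar par a lo hi.+1 = spar par a lo hi (+) par (a hi).
Proof. by move=> H; rewrite /spar big_nat_recr. Qed.

Lemma spar_recl a lo hi : (lo < hi)%N -> spar par a lo hi = par (a lo) (+) spar par a lo.+1 hi.
Proof. by move=> H; rewrite /spar big_ltn. Qed.

Lemma spar_cat a lo mid hi : (lo <= mid)%N -> (mid <= hi)%N ->
  spar par a lo hi = spar par a lo mid (+) spar par a mid hi.
Proof. by move=> H1 H2; rewrite /spar (big_cat_nat H1 H2). Qed.

Lemma spar_nil a lo : spar par a lo lo = false.
Proof. by rewrite /spar big_geq. Qed.

Lemma tpar_rnorm a n : tpar par (rnorm a n.+1) = spar par a 1 n.+2.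
Proof.
elim: n => [|n IH]; first by rewrite spar_recl // spar_nil addbF.
rewrite rnormS //; change (par (a n.+2) (+) tpar par (rnorm a n.+1) = spar par a 1 n.+3); by rewrite IH [RHS]spar_recr // addbC.
Qed.

Lemma spar_del a i n : (1 <= i <= n)%N ->
  spar par (del a i) 1 n = spar par a 1 i (+) spar par a i.+1 n.+1.
Proof.
case/andP=> H1 H2; rewrite (spar_cat _ H1 H2); congr addb.
  by apply: spar_ext => l /andP [_ Hl]; rewrite /del Hl.
rewrite /spar big_add1 /=; apply: eq_big_nat => l /andP [Hl _].
by rewrite /del ltnNge Hl.
Qed.

Lemma top a n i : (2 <= i <= n)%N ->
  simb 1 n (par (a i) && spar par a i.+1 n.+1) (rnorm a n)
       (Mul (Let (a i)) (rnorm (del a i) n.-1)).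
Proof.
elim: n i => [|n IH] i /andP [Hi Hin]; first by case: i Hi Hin.
case: n IH Hin => [|n] IH Hin; first by case: i Hi Hin => [|[]].
case: (eqVneq i n.+2) => [->|Hne].
  rewrite spar_nil andbF (@rnormS a n.+1) // [n.+2.-1]/= (@rnorm_ext (del a n.+2) a n).
    exact: simb_refl.
  by move=> l /andP [_ Hl]; rewrite /del ltnS Hl.
have Hin' : (i <= n.+1)%N by rewrite -ltnS ltn_neqAle Hne Hin.
case: n IH Hin Hne Hin' => [|n] IH Hin Hne Hin'; first by lia.
have H1 := IH i (introT andP (conj Hi Hin')).
have H2 := @simb_mull _ _ _ _ _ (Let (a n.+3)) 1%N n.+3 H1 erefl erefl.
have H3 := @simb_swap (a n.+3) (a i) (rnorm (del a i) n.+1) 1%N n.+3.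
rewrite root_LetMul rr_Mul root_LetMul rr_rnorm tlen_rnorm in H3.
have H4 := simb_trans H2 (H3 erefl erefl).
rewrite [n.+3.-1]/= [rnorm (del a i) n.+2]rnormS // (@rnormS a n.+2) //.
have -> : del a i n.+2 = a n.+3 by rewrite /del ltnNge Hin'.
apply: (simb_eqb H4).
rewrite (@spar_recr a i.+1 n.+3) //.
by case: (par (a i)); case: (par (a n.+3)); case: (spar par a i.+1 n.+3).
Qed.


Lemma del_repl a i x l : del (repl a i x) i l = del a i l.
Proof.
rewrite /del /repl; case: ltnP => H.
  by rewrite (ltn_eqF H).
by rewrite gtn_eqF // ltnS.
Qed.

Lemma part1 a b r m i j : (2 <= r)%N -> (2 <= m)%N -> (2 <= i <= r.+1)%N -> (2 <= j <= m)%N ->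
  simb 2 (r.+1 + m)
    ((par (a i) && (spar par a 1 i (+) spar par b j m.+1))
      (+) (par (b j) && (spar par a 1 i (+) spar par b j.+1 m.+1)))
    (Mul (rnorm a r.+1) (rnorm b m))
    (Mul (rnorm (repl a i (b j)) r.+1) (rnorm (repl b j (a i)) m)).
Proof.
case: r => [|[|r]] // _; case: m => [|[|m]] // _ Hi Hj.
set A := a i; set B := b j.
set mu1 := rnorm (del a i) r.+2; set nu1 := rnorm (del b j) m.+1.
set L := (r.+3 + m.+2)%N.
have S1 := @simb_mulr _ _ _ _ _ (rnorm b m.+2) 2%N L (@top a r.+3 i Hi).
rewrite rr_rnorm tlen_rnorm in S1; have {}S1 := S1 erefl erefl.
have S2 := @simb_mull _ _ _ _ _ (Mul (Let A) mu1) 2%N L (@top b m.+2 j Hj).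
rewrite root_LetMul rr_rnorm /= tlen_rnorm in S2; have {}S2 := S2 erefl.
have {}S2 : simb 2 L (par (b j) && spar par b j.+1 m.+3) (Mul (Mul (Let A) mu1) (rnorm b m.+2))
   (Mul (Mul (Let A) mu1) (Mul (Let B) nu1)) by apply: S2; rewrite /L; lia.
have S3 := simb_rel2 2 L (Let A) mu1 (Mul (Let B) nu1).
have S4 := @simb_swap A B nu1 1%N m.+3.
rewrite root_LetMul rr_Mul root_LetMul rr_rnorm tlen_rnorm in S4.
have {}S4 := @simb_mulr _ _ _ _ _ mu1 2%N L (S4 erefl erefl).
rewrite rr_rnorm tlen_rnorm in S4; have {}S4 := S4 erefl.
have {}S4 : simb 2 L (par A && par B) (Mul (Mul (Let A) (Mul (Let B) nu1)) mu1)
   (Mul (Mul (Let B) (Mul (Let A) nu1)) mu1) by apply: S4; rewrite /L; lia.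
have S5 := simb_sym (simb_rel2 2 L (Let B) mu1 (Mul (Let A) nu1)).
have S6 := @top (repl a i B) r.+3 i Hi.
have HB : repl a i B i = B by rewrite /repl eqxx.
rewrite HB [r.+3.-1]/= (@rnorm_ext _ (del a i) r.+1) in S6;
  last by move=> l _; rewrite del_repl.
have {}S6 := @simb_mulr _ _ _ _ _ (Mul (Let A) nu1) 2%N L (simb_sym S6).
rewrite rr_Mul root_LetMul rr_rnorm /= tlen_rnorm in S6.
have {}S6 : simb 2 L (par B && spar par (repl a i B) i.+1 r.+4) (Mul (Mul (Let B) mu1) (Mul (Let A) nu1))
   (Mul (rnorm (repl a i B) r.+3) (Mul (Let A) nu1)) by apply: S6 => //; rewrite /L; lia.
have S7 := @top (repl b j A) m.+2 j Hj.
have HA : repl b j A j = A by rewrite /repl eqxx.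
rewrite HA [m.+2.-1]/= (@rnorm_ext _ (del b j) m) in S7;
  last by move=> l _; rewrite del_repl.
have {}S7 := @simb_mull _ _ _ _ _ (rnorm (repl a i B) r.+3) 2%N L (simb_sym S7).
rewrite root_rnorm tlen_rnorm in S7.
have {}S7 := S7 erefl erefl.
have T := simb_trans (simb_trans (simb_trans (simb_trans (simb_trans (simb_trans S1 S2) S3) S4) S5) S6) S7.
apply: (simb_eqb T).
have E1 : tpar par mu1 = spar par a 1 i (+) spar par a i.+1 r.+4.
  by rewrite /mu1 tpar_rnorm spar_del //; case/andP: Hi => /ltnW -> ->.
have E2 : tpar par nu1 = spar par b 1 j (+) spar par b j.+1 m.+3.
  by rewrite /nu1 tpar_rnorm spar_del //; case/andP: Hj => /ltnW -> ->.
have E3 : spar par (repl a i B) i.+1 r.+4 = spar par a i.+1 r.+4.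
  by apply: spar_ext => l /andP [Hl _]; rewrite /repl gtn_eqF.
have E4 : spar par (repl b j A) j.+1 m.+3 = spar par b j.+1 m.+3.
  by apply: spar_ext => l /andP [Hl _]; rewrite /repl gtn_eqF.
have E5 : spar par b j m.+3 = par B (+) spar par b j.+1 m.+3.
  by rewrite spar_recl //; case/andP: Hj.
change (tpar par (Mul (Let B) nu1)) with (par B (+) tpar par nu1).
change (tpar par (Mul (Let A) nu1)) with (par A (+) tpar par nu1).
rewrite E1 E2 E3 E4 E5 -/A -/B.
by case: (par A); case: (par B); case: (spar par a 1 i); case: (spar par a i.+1 r.+4);
   case: (spar par b 1 j); case: (spar par b j.+1 m.+3).
Qed.


Lemma part2 a b r : (2 <= r)%N -> a 1%N = b 1%N -> par (a 1%N) ->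
  simb 2 (r.+1 + r) true (Mul (rnorm a r.+1) (rnorm b r)) (Mul (rnorm a r.+1) (rnorm b r)).
Proof.
case: r => [|[|r]] // _ Hab Hodd.
set x0 := fun l => if l == r.+3 then a r.+3 else b l.
pose xk q l := if (2 <= l <= q)%N then a l else x0 l.
pose yk q l := if (2 <= l <= q)%N then b l else a l.
set P := spar par a 1 r.+3.
pose E q := (P && (spar par b 2 q.+1 (+) spar par a 2 q.+1)) (+) spar par a 2 q.+1.
set L := (r.+3 + r.+2)%N.
have Claim : forall q, (1 <= q <= r.+2)%N ->
  simb 2 L (E q) (Mul (rnorm x0 r.+3) (rnorm a r.+2)) (Mul (rnorm (xk q) r.+3) (rnorm (yk q) r.+2)).
  elim=> [|q IH] Hq; first by [].
  case: q IH Hq => [|q] IH Hq.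
    rewrite (@rnorm_ext (xk 1%N) x0); last by move=> l _; rewrite /xk; case: l => [|[|l]].
    rewrite (@rnorm_ext (yk 1%N) a); last by move=> l _; rewrite /yk; case: l => [|[|l]].
    by rewrite /E !spar_nil /= andbF; apply: simb_refl.
  have IH' := IH (introT andP (conj (isT : (1 <= q.+1)%N) (ltnW (proj2 (andP Hq))))).
  have Hr : (q.+2 <= r.+2)%N by case/andP: Hq.
  have H1 := @part1 (xk q.+1) (yk q.+1) r.+2 r.+2 q.+2 q.+2 isT isT
     (introT andP (conj isT (leqW Hr))) (introT andP (conj isT Hr)).
  have Ex : xk q.+1 q.+2 = b q.+2.
    by rewrite /xk /x0 ltnn andbF; have -> : (q.+2 == r.+3) = false by lia.
  have Ey : yk q.+1 q.+2 = a q.+2 by rewrite /yk ltnn andbF.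
  rewrite Ex Ey in H1.
  rewrite (@rnorm_ext (repl (xk q.+1) q.+2 (a q.+2)) (xk q.+2)) in H1; last first.
    move=> l _; rewrite /repl /xk; case: eqVneq => [->|ne]; first by rewrite leqnn andbT.
    by rewrite [(l <= q.+2)%N]leq_eqVlt (negbTE ne) ltnS.
  rewrite (@rnorm_ext (repl (yk q.+1) q.+2 (b q.+2)) (yk q.+2)) in H1; last first.
    move=> l _; rewrite /repl /yk; case: eqVneq => [->|ne]; first by rewrite leqnn andbT.
    by rewrite [(l <= q.+2)%N]leq_eqVlt (negbTE ne) ltnS.
  apply: (simb_eqb (simb_trans IH' H1)).
  have F1 : spar par (xk q.+1) 1 q.+2 = par (a 1%N) (+) spar par a 2 q.+2.
    rewrite spar_recl //; congr addb; first by rewrite /xk /x0 /= Hab.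
    by apply: spar_ext => l /andP [H2 H3]; rewrite /xk H2 -ltnS H3.
  have F2 : spar par (yk q.+1) q.+2 r.+3 = par (a q.+2) (+) spar par a q.+3 r.+3.
    rewrite -spar_recl; last by rewrite ltnS.
    by apply: spar_ext => l /andP [H2 H3]; rewrite /yk (leqNgt l q.+1) H2 andbF.
  have F3 : spar par (yk q.+1) q.+3 r.+3 = spar par a q.+3 r.+3.
    by apply: spar_ext => l /andP [H2 H3]; rewrite /yk (leqNgt l q.+1) (ltnW H2) andbF.
  have HP : P = par (a 1%N) (+) spar par a 2 q.+2 (+) par (a q.+2) (+) spar par a q.+3 r.+3.
    rewrite /P spar_recl // (@spar_cat a 2 q.+2 r.+3) // ?(@spar_recl a q.+2 r.+3) //.
      by rewrite !addbA.
    by apply: ltnW.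
  rewrite F1 F2 F3 /E HP (@spar_recr b 2 q.+2) // (@spar_recr a 2 q.+2) //.
  by case: (par (a 1%N)); case: (spar par a 2 q.+2); case: (par (a q.+2));
     case: (spar par a q.+3 r.+3); case: (par (b q.+2)); case: (spar par b 2 q.+2).
have C := Claim r.+2 (introT andP (conj isT (leqnn _))).
rewrite (@rnorm_ext (xk r.+2) a) in C; last first.
  move=> l /andP [H1 H2]; rewrite /xk /x0; case: l H1 H2 => [|[|l]] // _ H2.
  rewrite -[(l.+2 <= r.+2)%N]ltnS; case: (ltngtP l.+2 r.+3) H2 => [lt|gt|eq] H2 //=.
  by rewrite eq.
rewrite (@rnorm_ext (yk r.+2) b) in C; last first.
  move=> l /andP [H1 H2]; rewrite /yk; case: l H1 H2 => [|[|l]] // _ H2.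
  by rewrite /= H2.
have R := simb_rel2 2 L (Let (a r.+3)) (rnorm a r.+2) (rnorm b r.+2).
have Hx0 : rnorm x0 r.+3 = Mul (Let (a r.+3)) (rnorm b r.+2).
  rewrite rnormS // /x0 eqxx (@rnorm_ext _ b) // => l /andP [_ H2].
  by have -> : (l == r.+3) = false by lia.
have Hmu : rnorm a r.+3 = Mul (Let (a r.+3)) (rnorm a r.+2) by rewrite rnormS.
rewrite Hx0 in C; rewrite [in X in simb _ _ _ _ X]Hmu in C.
rewrite Hmu; apply: (simb_eqb (simb_trans R C)).
rewrite !tpar_rnorm -/P /E.
have HP : P = par (a 1%N) (+) spar par a 2 r.+3 by rewrite /P spar_recl.
rewrite HP (@spar_recl b 1 r.+3) // -Hab Hodd.
by case: (spar par a 2 r.+3); case: (spar par b 2 r.+3).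
Qed.


Lemma simb_gdn n L e T T' : simb n L e T T' -> n = root_num T -> L = tlen T ->
  root_num T = root_num T' -> tlen T = tlen T' -> gdn_sim par 1 T (sgn k e) T'.
Proof.
move=> [h [Hh Z]] Hn HL Hr Hl; split => //; first exact: oner_neq0.
  exact: sgn_neq0.
exists (lc_neg h); split.
  by move=> p /mapP [q Hq ->] /=; rewrite -Hn -HL; exact: Hh.
apply: (gdn_ext Z) => u; rewrite !coef_cat coef_neg coef_neg opprK.
by [].
Qed.

Lemma rootMM a b r m : (1 <= r)%N -> (2 <= m)%N ->
  root_num (Mul (rnorm a r.+1) (rnorm b m)) = 2%N.
Proof.
case: r => [|r] // _; case: m => [|[|m]] // _.
by rewrite root_Mul root_rnorm rr_rnorm.
Qed.

Lemma tlenMM a b r m : (1 <= m)%N -> tlen (Mul (rnorm a r.+1) (rnorm b m)) = (r.+1 + m)%N.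
Proof. by case: m => [|m] // _ /=; rewrite !tlen_rnorm. Qed.

Lemma half_lemma (hchar : (2%:R : k) != 0) n L (T : term) :
  EQ n L [:: (1, T); (- sgn k true, T)] ->
  exists s : lc, higher n L s /\ gdn_zero par ((1, T) :: lc_neg s).
Proof.
move=> [h [Hh Z]]; exists (lc_scale (- 2%:R^-1) h); split.
  by move=> p /mapP [q Hq ->] /=; exact: Hh.
apply: (gdn_ext (gdn_scale (2%:R^-1) Z)) => u.
rewrite coef_scale coef_cat !coef_cons coef_nil coef_neg coef_scale /= /sgn expr1.
by field.
Qed.

End Work.

Theorem lemma2p9 (k : fieldType) (X : eqType) (par : X -> bool)
    (hchar : (2%:R : k) != 0) (r m : nat) (hr : (2 <= r)%N) (hm : (2 <= m)%N)
    (a b : nat -> X) :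
  let mu := rnorm a r.+1 in
  let nu := rnorm b m in
  (forall i j, (2 <= i <= r.+1)%N -> (2 <= j <= m)%N ->
     gdn_sim (k:=k) par 1 (Mul mu nu)
       (sgn k ((par (a i) && (spar par a 1 i (+) spar par b j m.+1))
               (+) (par (b j) && (spar par a 1 i (+) spar par b j.+1 m.+1))))
       (Mul (rnorm (repl a i (b j)) r.+1) (rnorm (repl b j (a i)) m)))
  /\
  (r = m -> a 1%N = b 1%N -> par (a 1%N) ->
     gdn_sim (k:=k) par 1 (Mul mu nu) (-1) (Mul mu nu)
     /\ exists s : lc k X,
          (forall p, p \in s -> tlen p.2 = (tlen mu + tlen nu)%N /\
                                (root_num mu + root_num nu < root_num p.2)%N)
          /\ gdn_zero (k:=k) par ((1, Mul mu nu) :: [seq (- p.1, p.2) | p <- s])).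
Proof.
have hr1 : (1 <= r)%N by apply: leq_trans hr.
have hm1 : (1 <= m)%N by apply: leq_trans hm.
move=> mu nu; rewrite /mu /nu; split.
  move=> i j Hi Hj.
  apply: (simb_gdn (@part1 k X par a b r m i j hr hm Hi Hj)).
  - by rewrite rootMM.
  - by rewrite tlenMM.
  - by rewrite !rootMM.
  - by rewrite !tlenMM.
move=> Hrm H1 Hodd; subst m.
have S := @part2 k X par a b r hr H1 Hodd.
split.
  have -> : (-1 : k) = sgn k true by rewrite /sgn expr1.
  apply: (simb_gdn S); by rewrite ?rootMM ?tlenMM.
have [s [Hs Z]] := half_lemma hchar S.
exists s; split => // p Hp; have [Hl Hrt] := Hs p Hp.
have E1 : (root_num (rnorm a r.+1) + root_num (rnorm b r))%N = 2%N.
  by case: (r) hr => [|[|r']] // _; rewrite !root_rnorm.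
have E2 : (tlen (rnorm a r.+1) + tlen (rnorm b r))%N = (r.+1 + r)%N.
  by case: (r) hr => [|r'] // _; rewrite !tlen_rnorm.
rewrite E1 E2; split.
  by rewrite Hl.
exact: Hrt.
Qed.
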